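(* $\Delta_0$ is the union of the good simplices.
   Context: Let $k\ge2$, $n=2k-1$, $e_1,\dots,e_k$ the standard basis of $\mathbb R^k$, $r_{(k)}=(r,\dots,r)\in\mathbb R^k$. In $\mathbb R^{2k}$ set $A_j=(e_j,0_{(k)})$, $B_j=\frac1{2n}(2_{(k)}-e_j,2_{(k)}-e_j)$, $C_j=(0_{(k)},e_j)$ for $j=1,\dots,k$; $A,B,C$ the corresponding $k$-element sets and $X=A\cup B\cup C$. $\langle\cdot\rangle$ denotes convex hull. $\Delta_0=\langle A\cup C\rangle$ is the standard simplex. A $2k$-element subset $S\subset X$ is good if it contains no set $\{A_j,B_j,C_j\}$ and $S\ne A\cup C$; a good simplex is $\langle S\rangle$ for a good set $S$. *)

(* Defs.v *)
From mathcomp Require Import all_boot all_order all_algebra.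
Set Implicit Arguments. Unset Strict Implicit. Unset Printing Implicit Defensive.
Import Order.TTheory GRing.Theory Num.Theory.
Local Open Scope ring_scope.

(* Points of X are labelled by (t, j) : 'I_3 * 'I_k, where
   t = 0 : A_j,  t = 1 : B_j,  t = 2 : C_j.  Points live in R^(2k) = 'rV_(k+k). *)
Definition lbl (k : nat) := ('I_3 * 'I_k)%type.

Section Pts.
Variables (R : realFieldType) (k : nat).

Definition evec (j : 'I_k) : 'rV[R]_k := \row_(i < k) (i == j)%:R.

Definition nn : nat := (2 * k - 1)%N.

Definition ptA (j : 'I_k) : 'rV[R]_(k + k) := row_mx (evec j) 0.
Definition ptB (j : 'I_k) : 'rV[R]_(k + k) :=
  (2 * nn%:R)^-1 *: row_mx (const_mx 2 - evec j) (const_mx 2 - evec j).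
Definition ptC (j : 'I_k) : 'rV[R]_(k + k) := row_mx 0 (evec j).

Definition pt (l : lbl k) : 'rV[R]_(k + k) :=
  let: (t, j) := l in
  if val t == 0%N then ptA j else if val t == 1%N then ptB j else ptC j.

Definition in_hull (S : {set lbl k}) (x : 'rV[R]_(k + k)) : Prop :=
  exists w : lbl k -> R,
    (forall l, 0 <= w l) /\ \sum_(l in S) w l = 1 /\
    x = \sum_(l in S) w l *: pt l.
End Pts.

Definition labA (k : nat) : {set lbl k} := [set l | val l.1 == 0%N].
Definition labC (k : nat) : {set lbl k} := [set l | val l.1 == 2%N].

Definition good (k : nat) (S : {set lbl k}) : Prop :=
  #|S| = (2 * k)%N /\
  (forall j : 'I_k, ~ (forall t : 'I_3, (t, j) \in S)) /\
  S <> labA k :|: labC k.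

(* Main.v *)
Require Import Defs.
From mathcomp Require Import all_boot all_order all_algebra.
From mathcomp Require Import ring lra.
Set Implicit Arguments. Unset Strict Implicit. Unset Printing Implicit Defensive.
Import Order.TTheory GRing.Theory Num.Theory.
Local Open Scope ring_scope.

Lemma exists_min (T : finType) (R : realFieldType) (P : pred T) (f : T -> R) (x0 : T) :
  P x0 -> exists x, P x /\ forall y, P y -> f x <= f y.
Proof.
move=> Px0; case: (@arg_minP _ _ T x0 P f Px0) => x Px H.
by exists x; split=> // y Py; apply: H.
Qed.

Definition o0 : 'I_3 := @Ordinal 3 0 isT.
Definition o1 : 'I_3 := @Ordinal 3 1 isT.
Definition o2 : 'I_3 := @Ordinal 3 2 isT.

Lemma sum_lbl (V : Type) (idx : V) (op : Monoid.com_law idx) k (F : lbl k -> V) :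
  \big[op/idx]_l F l = \big[op/idx]_i op (op (F (o0,i)) (F (o1,i))) (F (o2,i)).
Proof.
rewrite (eq_bigr (fun l => F (l.1,l.2))); last by case.
rewrite -(pair_big xpredT xpredT (fun t j => F (t, j))) /= exchange_big /=.
apply: eq_bigr => i _; rewrite !big_ord_recl big_ord0 Monoid.mulm1 Monoid.mulmA.
by congr (op (op (F (_, i)) (F (_, i))) (F (_, i))); apply/val_inj.
Qed.

Lemma sum_in_lbl (V : zmodType) k (S : {set lbl k}) (F : lbl k -> V) :
  \sum_(l in S) F l = \sum_i ((if (o0,i) \in S then F (o0,i) else 0)
     + (if (o1,i) \in S then F (o1,i) else 0) + (if (o2,i) \in S then F (o2,i) else 0)).
Proof. by rewrite big_mkcond /= (sum_lbl _ (fun l => if l \in S then F l else 0)). Qed.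

Section Geo.
Variables (R : realFieldType) (k : nat).
Local Notation beta := ((2 * (nn k)%:R)^-1 : R).

Definition comb (p q r : 'I_k -> R) : 'rV[R]_(k + k) :=
  \sum_i (p i *: ptA R i + q i *: ptB R i + r i *: ptC R i).

Lemma eq_lr (y z : 'rV[R]_(k + k)) :
  (forall i, y 0 (lshift k i) = z 0 (lshift k i)) ->
  (forall i, y 0 (rshift k i) = z 0 (rshift k i)) -> y = z.
Proof.
move=> Hl Hr; apply/rowP => p; case: (splitP p) => j Hj.
  by have -> : p = lshift k j by apply/val_inj.
by have -> : p = rshift k j by apply/val_inj.
Qed.

Lemma splitL (i : 'I_k) : split (lshift k i) = inl i.
Proof. exact: (unsplitK (inl _ i)). Qed.
Lemma splitR (i : 'I_k) : split (rshift k i) = inr i.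
Proof. exact: (unsplitK (inr _ i)). Qed.

Lemma sum_delta (f : 'I_k -> R) i : \sum_j f j * (i == j)%:R = f i.
Proof.
rewrite (bigD1 i) //= eqxx mulr1 big1 ?addr0 // => j /negbTE.
by rewrite eq_sym => ->; rewrite mulr0.
Qed.

Lemma comb_l p q r i :
  (comb p q r) 0 (lshift k i) = p i + beta * (2 * \sum_j q j - q i).
Proof.
rewrite /comb summxE.
rewrite (eq_bigr (fun j => p j * (i == j)%:R + ((2 * beta) * q j - beta * (q j * (i == j)%:R)))).
  rewrite big_split /= sum_delta sumrB -mulr_sumr -mulr_sumr sum_delta; congr (_ + _).
  by rewrite mulrBr mulrA [beta * 2]mulrC.
move=> j _; rewrite /ptA /ptB /ptC !mxE splitL ?mxE.
by rewrite mulr0 addr0; ring.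
Qed.

Lemma comb_r p q r i :
  (comb p q r) 0 (rshift k i) = r i + beta * (2 * \sum_j q j - q i).
Proof.
rewrite /comb summxE.
rewrite (eq_bigr (fun j => r j * (i == j)%:R + ((2 * beta) * q j - beta * (q j * (i == j)%:R)))).
  rewrite big_split /= sum_delta sumrB -mulr_sumr -mulr_sumr sum_delta; congr (_ + _).
  by rewrite mulrBr mulrA [beta * 2]mulrC.
move=> j _; rewrite /ptA /ptB /ptC !mxE splitR ?mxE.
by rewrite mulr0 add0r; ring.
Qed.

End Geo.

Section Main.
Variables (R : realFieldType) (k : nat).
Local Notation beta := ((2 * (nn k)%:R)^-1 : R).

Definition W (p q r : 'I_k -> R) (l : lbl k) : R :=
  if val l.1 == 0%N then p l.2 else if val l.1 == 1%N then q l.2 else r l.2.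

Lemma assemble p q r (x : 'rV[R]_(k + k)) (omit : 'I_k -> 'I_3) :
 (forall i, 0 <= p i) -> (forall i, 0 <= q i) -> (forall i, 0 <= r i) ->
 \sum_i (p i + q i + r i) = 1 -> x = comb p q r ->
 (forall i, W p q r (omit i, i) = 0) -> (exists i, omit i != o1) ->
 exists S, good S /\ in_hull S x.
Proof.
move=> hp hq hr hs hx hom hex.
set S := [set l : lbl k | l.1 != omit l.2].
have HW : forall l, l \notin S -> W p q r l = 0.
  by move=> [t j]; rewrite inE negbK /= => /eqP ->.
exists S; split.
  split.
    rewrite -sum1_card big_mkcond /= sum_lbl.
    rewrite (eq_bigr (fun=> 2%N)) ?sum_nat_const ?card_ord 1?mulnC // => i _.
    rewrite !inE /=; case: (omit i) => [[|[|[|m]]] Hm] //=.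
  split.
    by move=> j H; have := H (omit j); rewrite inE /= eqxx.
  move=> E; case: hex => i0 Hi0.
  have : (o1, i0) \in S by rewrite inE /= eq_sym.
  by rewrite E !inE.
exists (W p q r); split.
  by move=> [t j]; rewrite /W; case: ifP => _; last case: ifP => _.
split.
  rewrite big_mkcond (eq_bigr (W p q r)) => [|l _]; last by case: ifP => // /negbT /HW ->.
  by rewrite sum_lbl.
rewrite big_mkcond (eq_bigr (fun l => W p q r l *: pt R l)) => [|l _];
  last by case: ifP => // /negbT /HW ->; rewrite scale0r.
by rewrite sum_lbl hx.
Qed.

End Main.

Lemma sum_pos (R : realFieldType) (T : finType) (J : {set T}) (m : T -> R) i :
  i \in J -> (forall i, 0 < m i) -> 0 < \sum_(j in J) m j.
Proof.
move=> iJ hm; rewrite (bigD1 i) //=.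
apply: (lt_le_trans (hm i)); rewrite lerDl; apply: sumr_ge0 => j _; exact: ltW.
Qed.

Lemma vexists (R : realFieldType) k (hk : (0 < k)%N) (m : 'I_k -> R) :
  (forall i, 0 < m i) ->
  exists v, 0 < v /\ \sum_i (if m i < v then v - m i else 0) = v / 2.
Proof.
move=> hm.
pose f (J : {set 'I_k}) := 2 * (\sum_(i in J) m i) / (2 * (#|J|%:R) - 1).
have [J0 [J0n J0min]] := @exists_min _ R (fun J => J != set0) f setT
  (introT (set0Pn _) (ex_intro _ (Ordinal hk) (in_setT _))).
have dpos : forall J : {set 'I_k}, J != set0 -> 0 < 2 * (#|J|%:R) - 1 :> R.
  move=> J; rewrite -card_gt0 => hc.
  have : (1 <= #|J|%:R :> R) by rewrite ler1n.
  lra.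
set v := f J0.
have [j0 j0in] : {j | j \in J0} by case: (set_0Vmem J0) => [E|//]; rewrite E eqxx in J0n.
have vpos : 0 < v.
  rewrite /v /f divr_gt0 ?dpos // mulr_gt0 //; exact: (sum_pos j0in hm).
have veq : v * (2 * (#|J0|%:R) - 1) = 2 * \sum_(i in J0) m i.
  by rewrite /v /f mulrAC -mulrA divff ?mulr1 // lt0r_neq0 // dpos.
have vle : forall J : {set 'I_k}, J != set0 ->
    v * (2 * (#|J|%:R) - 1) <= 2 * \sum_(i in J) m i.
  by move=> J Jn; rewrite -ler_pdivlMr ?dpos //; exact: J0min.
exists v; split => //.
set J1 := [set i | m i < v].
have -> : \sum_i (if m i < v then v - m i else 0) = \sum_(i in J1) (v - m i).
  by rewrite [RHS]big_mkcond; apply: eq_bigr => i _; rewrite inE.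
apply/eqP; rewrite eq_le; apply/andP; split.
  case: (set_0Vmem J1) => [->|[i1 i1in]]; first by rewrite big_set0; lra.
  have := vle J1 (introT (set0Pn _) (ex_intro _ i1 i1in)).
  rewrite sumrB sumr_const -mulr_natr; nra.
apply: (@le_trans _ _ (\sum_(i in J0) (v - m i))).
  rewrite sumrB sumr_const -mulr_natr; move: veq; nra.
rewrite [X in X <= _]big_mkcond [X in _ <= X]big_mkcond /=.
apply: ler_sum => i _; rewrite inE.
case: ifP => _; case: ifP => h //.
  by rewrite subr_le0 leNgt h.
by rewrite subr_ge0 ltW.
Qed.

Section Fin.
Variables (R : realFieldType) (k : nat) (hk : (0 < k)%N).
Local Notation beta := ((2 * (nn k)%:R)^-1 : R).

Definition sh (q : 'I_k -> R) i := beta * (2 * \sum_j q j - q i).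

Lemma nnE : (nn k)%:R = 2 * k%:R - 1 :> R.
Proof. by rewrite /nn natrB ?natrM // muln_gt0. Qed.

Lemma nn_neq0 : (nn k)%:R != 0 :> R.
Proof. by rewrite pnatr_eq0 /nn; case: k hk => // k' _; rewrite mulnS. Qed.

Lemma two_neq0 : (2 : R) != 0.
Proof. by rewrite pnatr_eq0. Qed.

Lemma twice_sh q : \sum_i sh q i + \sum_i sh q i = \sum_i q i.
Proof.
rewrite /sh -mulr_sumr sumrB sumr_const card_ord -[X in X - _]mulr_natr.
have hn := nn_neq0; have h2 := two_neq0.
have hk' : k%:R = ((nn k)%:R + 1) / 2 :> R by rewrite nnE; field.
by rewrite hk'; field.
Qed.

Lemma sh0 i : sh (fun=> 0) i = 0.
Proof. by rewrite /sh big1 // mulr0 subr0 mulr0. Qed.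

Lemma sh_ge0 q i : (forall j, 0 <= q j) -> 0 <= sh q i.
Proof.
move=> hq; rewrite /sh mulr_ge0 //.
  by rewrite invr_ge0 mulr_ge0 // ler0n.
have : q i <= \sum_j q j.
  by rewrite (bigD1 i) //= lerDl sumr_ge0.
have : 0 <= q i by [].
lra.
Qed.

Lemma comb_shift p q r :
  comb p q r = comb (fun i => p i + sh q i) (fun=> 0) (fun i => r i + sh q i).
Proof.
apply: eq_lr => i; rewrite ?comb_l ?comb_r /= big1_eq /sh; ring.
Qed.

Lemma choose_t (a c : 'I_k -> R) :
  (forall i, 0 <= a i) -> (forall i, 0 <= c i) ->
  exists t : 'I_k -> R, exists omit : 'I_k -> 'I_3,
   [/\ forall i, 0 <= t i, forall i, sh t i <= a i, forall i, sh t i <= c i,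
       forall i, W (fun i => a i - sh t i) t (fun i => c i - sh t i) (omit i, i) = 0
     & exists i, omit i != o1].
Proof.
move=> ha hc.
pose m i := if a i <= c i then a i else c i.
have mle : forall i, m i <= a i /\ m i <= c i.
  move=> i; rewrite /m; case: ifP => h; split => //.
  by move/negbT: h; rewrite -ltNge => /ltW.
have mge : forall i, 0 <= m i by move=> i; rewrite /m; case: ifP.
case: (pickP (fun i => m i == 0)) => [i0 /eqP hm0 | hpos].
  exists (fun=> 0), (fun i => if i == i0 then (if a i0 <= c i0 then o0 else o2) else o1).
  split => //; try by move=> i; rewrite sh0.
    move=> i; rewrite /W /=; have [->|ne] := eqVneq i i0; last by [].
    move: hm0; rewrite /m; case: ifP => _ /= ->; by rewrite sh0 subr0.
  by exists i0; rewrite eqxx; case: ifP.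
have mpos : forall i, 0 < m i.
  by move=> i; rewrite lt0r mge andbT; have := hpos i => /= ->.
have [v [vpos vsum]] := vexists hk mpos.
pose n : R := (nn k)%:R.
have hn : n != 0 := nn_neq0.
have h2 := two_neq0.
pose t i := if m i < v then 2 * n * (v - m i) else 0.
have tsum : \sum_i t i = n * v.
  rewrite (eq_bigr (fun i => 2 * n * (if m i < v then v - m i else 0))).
    by rewrite -mulr_sumr vsum; field.
  by move=> i _; rewrite /t; case: ifP => _ //; rewrite mulr0.
have shE : forall i, sh t i = if m i < v then m i else v.
  move=> i; rewrite /sh tsum /t -/n; by case: ifP => _; field.
exists t, (fun i => if m i < v then (if a i <= c i then o0 else o2) else o1).
split.
- move=> i; rewrite /t; case: ifP => // h.
  apply: mulr_ge0; last by rewrite subr_ge0 ltW.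
  by apply: mulr_ge0; rewrite /n ler0n.
- move=> i; rewrite shE; case: ifP => h; first by case: (mle i).
  move/negbT: h; rewrite -leNgt => h; apply: (le_trans h); by case: (mle i).
- move=> i; rewrite shE; case: ifP => h; first by case: (mle i).
  move/negbT: h; rewrite -leNgt => h; apply: (le_trans h); by case: (mle i).
- move=> i; rewrite /W /= shE; case: (boolP (m i < v)) => h /=.
    rewrite /m; case: (boolP (a i <= c i)) => h' /=; by rewrite subrr.
  by rewrite /t (negbTE h).
- have : exists i, m i < v.
    apply/existsP; apply: contraT; rewrite negb_exists => /forallP H.
    move: vsum; rewrite big1 => [|i _]; last by rewrite (negbTE (H i)).
    lra.
  by case=> i hi; exists i; rewrite hi; case: ifP.
Qed.

End Fin.

Section Dir.
Variables (R : realFieldType) (k : nat) (hk : (0 < k)%N).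

Lemma sum3 (f g h : 'I_k -> R) :
  \sum_i (f i + g i + h i) = \sum_i f i + \sum_i g i + \sum_i h i.
Proof. by rewrite !big_split. Qed.

Lemma fwd (x : 'rV[R]_(k + k)) :
  in_hull (labA k :|: labC k) x -> exists S, good S /\ in_hull S x.
Proof.
case=> w [w0 [ws wx]].
pose a i := w (o0, i); pose c i := w (o2, i).
have hx : x = comb a (fun=> 0) c.
  rewrite wx sum_in_lbl /comb; apply: eq_bigr => i _; rewrite !inE /= scale0r.
  by rewrite addr0.
have hs : \sum_i (a i + 0 + c i) = 1.
  by rewrite -ws sum_in_lbl; apply: eq_bigr => i _; rewrite !inE.
have [t [om [t0 ta tc tW tex]]] := choose_t hk (fun i => w0 (o0, i)) (fun i => w0 (o2, i)).
apply: (@assemble R k (fun i => a i - sh t i) t (fun i => c i - sh t i) x om) => //.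
- by move=> i; rewrite subr_ge0.
- by move=> i; rewrite subr_ge0.
- rewrite -hs !sum3 !sumrB -(twice_sh hk t) big1_eq; ring.
- rewrite hx; apply: eq_lr => i; rewrite ?comb_l ?comb_r big1_eq /sh; ring.
Qed.

Lemma bwd (S : {set lbl k}) (x : 'rV[R]_(k + k)) :
  in_hull S x -> in_hull (labA k :|: labC k) x.
Proof.
case=> w [w0 [ws wx]].
pose p i := if (o0, i) \in S then w (o0, i) else 0.
pose q i := if (o1, i) \in S then w (o1, i) else 0.
pose r i := if (o2, i) \in S then w (o2, i) else 0.
have E : forall (b : bool) (u : R) (v : 'rV[R]_(k + k)),
    (if b then u *: v else 0) = (if b then u else 0) *: v.
  by move=> [] u v //; rewrite scale0r.
have hx : x = comb p q r by rewrite wx sum_in_lbl /comb; apply: eq_bigr => i _ /=; rewrite !E.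
have hs : \sum_i (p i + q i + r i) = 1 by rewrite -ws sum_in_lbl.
have hp : forall i, 0 <= p i by move=> i; rewrite /p; case: ifP.
have hq : forall i, 0 <= q i by move=> i; rewrite /q; case: ifP.
have hr : forall i, 0 <= r i by move=> i; rewrite /r; case: ifP.
exists (W (fun i => p i + sh q i) (fun=> 0) (fun i => r i + sh q i)); split.
  move=> [t j]; rewrite /W; case: ifP => _; last case: ifP => _ //;
    by rewrite addr_ge0 // sh_ge0.
split.
  rewrite sum_in_lbl -hs.
  rewrite (eq_bigr (fun i => (p i + sh q i) + 0 + (r i + sh q i))); last first.
    by move=> i _; rewrite !inE.
  rewrite !sum3 !big_split /= -(twice_sh hk q) big1_eq; ring.
rewrite sum_in_lbl hx comb_shift /comb; apply: eq_bigr => i _; rewrite !inE /=.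
by rewrite scale0r.
Qed.

End Dir.

Theorem mainTheorem8 (R : realFieldType) (k : nat) (hk : (2 <= k)%N)
    (x : 'rV[R]_(k + k)) :
  in_hull (labA k :|: labC k) x <-> exists S : {set lbl k}, good S /\ in_hull S x.
Proof.
have hk0 : (0 < k)%N by apply: leq_trans hk.
split; first exact: fwd.
by case=> S [_ H]; exact: bwd H.
Qed.
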